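(* Let $n_0>0$, $\alpha>0$, $P>0$. For each $T>0$ and integer $k\ge1$ let $\omega_k(T)>0$ be the unique positive solution of $2\arctan(\omega_k/\alpha)=k\pi-\omega_k T$, set $\lambda_k(T)=\frac{2\alpha P}{\alpha^2+\omega_k(T)^2}$ (the Mercer eigenvalues on $[0,T]$ of the kernel $Pe^{-\alpha|t_1-t_2|}$), and define $$I(T)=\frac12\sum_{k=1}^{\infty}\log\left(1+\frac{\lambda_k(T)}{n_0/2}\right).$$ Then the instantaneous finite-time rate at the origin satisfies $$C(0^+)=\frac{\partial I(T)}{\partial T}\Big|_{T=0^+}=\frac{P}{n_0}.$$
   Context: Setting: the transmitted signal is a zero-mean stationary Gaussian process with autocorrelation $Pe^{-\alpha|\tau|}$ observed on $[0,T]$ in additive white Gaussian noise of power spectral density $n_0/2$; $I(T)$ is the finite-time mutual information and $C(T)=I(T)/T$ the finite-time rate, with $C(0^+)$ its limit as $T\to0^+$, equal to the right derivative of $I$ at $T=0$ (where $I(0)=0$). Logarithms are natural. *)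

(* Defs.v *)
From Stdlib Require Import Reals.
From Coquelicot Require Import Coquelicot.
Open Scope R_scope.

Definition omega_spec (alpha : R) (omega : nat -> R -> R) : Prop :=
  forall (T : R) (k : nat), 0 < T -> (1 <= k)%nat ->
    0 < omega k T /\
    2 * atan (omega k T / alpha) = INR k * PI - omega k T * T.

Definition lambda (alpha P : R) (omega : nat -> R -> R) (k : nat) (T : R) : R :=
  2 * alpha * P / (alpha ^ 2 + (omega k T) ^ 2).

Definition I_term (n0 alpha P : R) (omega : nat -> R -> R) (T : R) (k : nat) : R :=
  / 2 * ln (1 + lambda alpha P omega k T / (n0 / 2)).

(* I(T) = 1/2 sum_{k>=1} log(1 + lambda_k(T)/(n0/2)); index shifted so that
   the Coquelicot series index j = 0 corresponds to k = 1. *)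
Definition mutual_info (n0 alpha P : R) (omega : nat -> R -> R) (T : R) : R :=
  Series (fun j => I_term n0 alpha P omega T (S j)).

(* Main.v *)
Require Import Defs.
From Stdlib Require Import Reals Lra Psatz.
From Coquelicot Require Import Coquelicot.
Open Scope R_scope.

Lemma ln_le_xm1 x : 0 < x -> ln x <= x - 1.
Proof.
  intros Hx. rewrite <- (ln_exp (x - 1)). apply ln_le; auto.
  pose proof (exp_ineq1_le (x - 1)). lra.
Qed.

Lemma ln1p_up x : 0 <= x -> ln (1 + x) <= x.
Proof. intros. pose proof (ln_le_xm1 (1 + x)). lra. Qed.

Lemma ln1p_low x : 0 <= x -> x / (1 + x) <= ln (1 + x).
Proof.
  intros Hx. pose proof (ln_le_xm1 (/ (1 + x))) as H.
  rewrite ln_Rinv in H by lra.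
  assert (/ (1 + x) - 1 = - (x / (1 + x))) by (field; lra).
  assert (0 < / (1 + x)) by (apply Rinv_0_lt_compat; lra). lra.
Qed.

Lemma atan_mvt u : 0 < u -> exists c, 0 <= c <= u /\ atan u = / (1 + c ^ 2) * u.
Proof.
  intros Hu.
  destruct (MVT_gen atan 0 u (fun x => / (1 + x ^ 2))) as [c [Hc Hm]].
  - intros x _. apply is_derive_Reals. apply derivable_pt_lim_atan.
  - intros x _. apply derivable_continuous_pt. exists (/ (1 + x ^ 2)).
    apply derivable_pt_lim_atan.
  - rewrite Rmin_left in Hc by lra. rewrite Rmax_right in Hc by lra.
    exists c. split; auto. rewrite atan_0 in Hm. lra.
Qed.

Lemma atan_le_id u : 0 < u -> atan u <= u.
Proof.
  intros Hu. destruct (atan_mvt u Hu) as [c [Hc ->]].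
  assert (/ (1 + c ^ 2) <= 1).
  { rewrite <- Rinv_1. apply Rinv_le_contravar; nra. }
  nra.
Qed.

Lemma atan_ge u : 0 < u -> u / (1 + u ^ 2) <= atan u.
Proof.
  intros Hu. destruct (atan_mvt u Hu) as [c [Hc ->]].
  assert (/ (1 + u ^ 2) <= / (1 + c ^ 2)).
  { apply Rinv_le_contravar; nra. }
  unfold Rdiv. nra.
Qed.

Lemma om1_bounds alpha omega T : 0 < alpha -> omega_spec alpha omega -> 0 < T ->
  let w := omega 1%nat T in
  0 < w /\ w ^ 2 * T <= 2 * alpha /\ 2 * alpha <= T * (alpha ^ 2 + w ^ 2).
Proof.
  intros Ha Hs HT w.
  destruct (Hs T 1%nat HT (le_n 1)) as [Hw He]. fold w in Hw, He.
  simpl INR in He.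
  assert (Hinv : atan (/ (w / alpha)) = PI / 2 - atan (w / alpha))
    by (apply atan_inv; apply Rdiv_lt_0_compat; lra).
  replace (/ (w / alpha)) with (alpha / w) in Hinv by (field; lra).
  assert (Hu : 0 < alpha / w) by (apply Rdiv_lt_0_compat; lra).
  assert (HwT : w * T = 2 * atan (alpha / w)) by lra.
  pose proof (atan_le_id _ Hu) as H1. pose proof (atan_ge _ Hu) as H2.
  split; [exact Hw|split].
  - assert (w * T <= 2 * (alpha / w)) by lra.
    apply Rmult_le_compat_l with (r := w) in H; [|lra].
    replace (w * (2 * (alpha / w))) with (2 * alpha) in H by (field; lra).
    nra.
  - assert (2 * (alpha / w / (1 + (alpha / w) ^ 2)) <= w * T) by lra.
    replace (alpha / w / (1 + (alpha / w) ^ 2)) with (alpha * w / (w ^ 2 + alpha ^ 2)) in H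
      by (field; nra).
    assert (Hp : 0 < w ^ 2 + alpha ^ 2) by nra.
    apply Rmult_le_compat_l with (r := (w ^ 2 + alpha ^ 2) / w) in H;
      [|apply Rlt_le, Rdiv_lt_0_compat; lra].
    replace ((w ^ 2 + alpha ^ 2) / w * (2 * (alpha * w / (w ^ 2 + alpha ^ 2)))) with (2 * alpha) in H
      by (field; lra).
    replace ((w ^ 2 + alpha ^ 2) / w * (w * T)) with (T * (alpha ^ 2 + w ^ 2)) in H
      by (field; lra).
    exact H.
Qed.

Lemma omk_bound alpha omega T j : 0 < alpha -> omega_spec alpha omega -> 0 < T ->
  INR j + 1 <= omega (S (S j)) T * T.
Proof.
  intros Ha Hs HT.
  destruct (Hs T (S (S j)) HT) as [Hw He]; [lia|].
  pose proof (atan_bound (omega (S (S j)) T / alpha)).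
  rewrite !S_INR in He. pose proof PI2_1. pose proof (pos_INR j).
  nra.
Qed.

Lemma tele_sum n : sum_n (fun j => / (INR j + 1) - / (INR j + 2)) n = 1 - / (INR n + 2).
Proof.
  induction n.
  - rewrite sum_O. simpl. field.
  - rewrite sum_Sn, IHn. rewrite S_INR.
    change (plus (1 - / (INR n + 2)) (/ (INR n + 1 + 1) - / (INR n + 1 + 2))) with
      ((1 - / (INR n + 2)) + (/ (INR n + 1 + 1) - / (INR n + 1 + 2))).
    change ((1 - / (INR n + 2)) + (/ (INR n + 1 + 1) - / (INR n + 1 + 2)) = 1 - / (INR n + 1 + 2)). pose proof (pos_INR n). field; lra.
Qed.

Lemma lim_inv : is_lim_seq (fun n => / (INR n + 2)) 0.
Proof.
  replace (Finite 0) with (Rbar_inv p_infty) by reflexivity.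
  apply is_lim_seq_inv; [|discriminate].
  eapply is_lim_seq_plus. apply is_lim_seq_INR. apply is_lim_seq_const. reflexivity.
Qed.

Lemma zeta2 : ex_series (fun j => / (INR j + 1) ^ 2).
Proof.
  apply (@ex_series_le R_AbsRing R_CompleteNormedModule) with (b := fun j => 2 * (/ (INR j + 1) - / (INR j + 2))).
  - intros j. pose proof (pos_INR j).
    rewrite Rabs_pos_eq by (apply Rlt_le, Rinv_0_lt_compat; nra).
    replace (2 * (/ (INR j + 1) - / (INR j + 2))) with (2 / ((INR j + 1) * (INR j + 2))) by (field; lra).
    replace (INR j + 2) with ((INR j + 1) + 1) by ring.
    assert (Ha : 1 <= INR j + 1) by lra.
    generalize dependent (INR j + 1). intros a Ha.
    replace (2 / (a * (a + 1))) with (/ (a * (a + 1) / 2)) by (field; split; lra).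
    apply Rinv_le_contravar. assert (0 < a * (a+1)) by nra. lra. nra.
  - apply (@ex_series_scal_l R_AbsRing R_NormedModule 2 (fun j => / (INR j + 1) - / (INR j + 2))).
    exists 1. unfold is_series.
    assert (H : is_lim_seq (sum_n (fun j => / (INR j + 1) - / (INR j + 2))) 1); [|exact H].
    apply is_lim_seq_ext with (u := fun n => 1 - / (INR n + 2)).
    { intros n. rewrite tele_sum. reflexivity. }
    assert (H1 : is_lim_seq (fun n => 1 - / (INR n + 2)) (1 - 0)).
    { apply (is_lim_seq_minus' _ _ 1 0). apply is_lim_seq_const. apply lim_inv. }
    rewrite Rminus_0_r in H1. exact H1.
Qed.

Lemma div_le a b d : 0 < d -> a <= b * d -> a / d <= b.
Proof. intros Hd H. apply Rmult_le_reg_r with d; auto. unfold Rdiv. rewrite Rmult_assoc, Rinv_l by lra. lra. Qed.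

Lemma le_div a b d : 0 < d -> b * d <= a -> b <= a / d.
Proof. intros Hd H. apply Rmult_le_reg_r with d; auto. unfold Rdiv. rewrite Rmult_assoc, Rinv_l by lra. lra. Qed.

Lemma term_bounds n0 alpha P omega T k : 0 < n0 -> 0 < alpha -> 0 < P ->
  let X := alpha ^ 2 + (omega k T) ^ 2 in
  0 < X ->
  0 <= I_term n0 alpha P omega T k /\
  2 * alpha * P / (n0 * X + 4 * alpha * P) <= I_term n0 alpha P omega T k /\
  I_term n0 alpha P omega T k <= 2 * alpha * P / (n0 * X).
Proof.
  intros Hn Ha HP X HX.
  unfold I_term, lambda. fold X.
  set (y := 2 * alpha * P / X / (n0 / 2)).
  assert (Hy : y = 4 * alpha * P / (n0 * X)) by (unfold y; field; lra).
  assert (Hy0 : 0 <= y) by (rewrite Hy; apply Rlt_le, Rdiv_lt_0_compat; nra).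
  pose proof (ln1p_up y Hy0). pose proof (ln1p_low y Hy0).
  assert (0 <= y / (1 + y)) by (apply Rmult_le_pos; [lra|left; apply Rinv_0_lt_compat; lra]).
  assert (y / (1 + y) = 4 * alpha * P / (n0 * X + 4 * alpha * P)) by (rewrite Hy; field; split; nra).
  split; [|split].
  - lra.
  - replace (2 * alpha * P / (n0 * X + 4 * alpha * P)) with (/2 * (y / (1 + y))) by (rewrite H2; field; nra).
    lra.
  - replace (2 * alpha * P / (n0 * X)) with (/2 * y) by (rewrite Hy; field; nra). lra.
Qed.

Lemma tail_bound n0 alpha P omega T j : 0 < n0 -> 0 < alpha -> 0 < P ->
  omega_spec alpha omega -> 0 < T ->
  0 <= I_term n0 alpha P omega T (S (S j)) <=
  (2 * alpha * P / n0 * T ^ 2) * / (INR j + 1) ^ 2.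
Proof.
  intros Hn Ha HP Hs HT.
  pose proof (omk_bound alpha omega T j Ha Hs HT) as Hk.
  set (w := omega (S (S j)) T) in *.
  assert (HX : 0 < alpha ^ 2 + w ^ 2) by nra.
  destruct (term_bounds n0 alpha P omega T (S (S j)) Hn Ha HP HX) as [H0 [_ H1]].
  fold w in H0, H1. split; auto.
  eapply Rle_trans; [exact H1|].
  pose proof (pos_INR j).
  assert (Hq : 1 <= T ^ 2 * (alpha ^ 2 + w ^ 2) / (INR j + 1) ^ 2).
  { apply le_div. nra. nra. }
  apply div_le. nra.
  replace (2 * alpha * P / n0 * T ^ 2 * / (INR j + 1) ^ 2 * (n0 * (alpha ^ 2 + w ^ 2)))
    with (2 * alpha * P * (T ^ 2 * (alpha ^ 2 + w ^ 2) / (INR j + 1) ^ 2)) by (field; lra).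
  rewrite <- (Rmult_1_r (2 * alpha * P)) at 1. apply Rmult_le_compat_l; nra.
Qed.

Lemma alg n0 alpha P T X a0 tl KZ : 0 < n0 -> 0 < alpha -> 0 < P -> 0 < T -> 0 < X ->
  2 * alpha <= T * X <= 2 * alpha + alpha ^ 2 * T ->
  2 * alpha * P / (n0 * X + 4 * alpha * P) <= a0 <= 2 * alpha * P / (n0 * X) ->
  0 <= tl <= KZ * T ^ 2 ->
  let D := n0 * alpha ^ 2 + 4 * alpha * P in
  let M := P * D / (2 * alpha * n0 ^ 2) in
  P / n0 - M * T <= (a0 + tl) / T <= P / n0 + KZ * T.
Proof.
  intros Hn Ha HP HT HX [HX1 HX2] [Ha1 Ha2] [Ht1 Ht2] D M.
  assert (Hup : a0 <= P * T / n0).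
  { eapply Rle_trans; [exact Ha2|]. apply div_le. nra.
    replace (P * T / n0 * (n0 * X)) with (P * (T * X)) by (field; lra). nra. }
  split.
  - apply le_div; auto.
    assert ((P / n0 - M * T) * T <= a0); [|nra].
    eapply Rle_trans; [|exact Ha1].
    destruct (Rle_lt_dec (P / n0 - M * T) 0) as [Hneg|Hpos].
    + assert (0 <= 2 * alpha * P / (n0 * X + 4 * alpha * P)) by (apply Rlt_le, Rdiv_lt_0_compat; nra).
      nra.
    + apply le_div. nra.
      assert (H1 : (P / n0 - M * T) * T * (n0 * X + 4 * alpha * P) <=
                   (P / n0 - M * T) * (n0 * (2 * alpha + alpha ^ 2 * T) + 4 * alpha * P * T)).
      { rewrite Rmult_assoc. apply Rmult_le_compat_l; [lra|]. nra. }
      eapply Rle_trans; [exact H1|].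
      assert (HM : M * (2 * alpha * n0) = P * D / n0) by (unfold M; field; lra).
      replace ((P / n0 - M * T) * (n0 * (2 * alpha + alpha ^ 2 * T) + 4 * alpha * P * T))
        with (2 * alpha * P + P * D / n0 * T - M * (2 * alpha * n0) * T - M * T * T * D)
        by (unfold D; field; lra).
      rewrite HM.
      assert (0 <= M * T * T * D).
      { assert (HD : 0 < D).
        { unfold D. assert (0 < n0 * alpha ^ 2) by (apply Rmult_lt_0_compat; [lra|apply pow_lt; lra]).
          assert (0 < 4 * alpha * P) by (apply Rmult_lt_0_compat; lra). lra. }
        assert (HM0 : 0 < M) by (unfold M; apply Rdiv_lt_0_compat; [apply Rmult_lt_0_compat; lra|];
          apply Rmult_lt_0_compat; [lra|apply pow_lt; lra]).
        apply Rmult_le_pos; [|lra]. apply Rmult_le_pos; [|lra].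
        apply Rmult_le_pos; lra. }
      lra.
  - apply div_le; auto.
    replace ((P / n0 + KZ * T) * T) with (P * T / n0 + KZ * T ^ 2) by (field; lra).
    lra.
Qed.

Lemma tail_ex n0 alpha P omega T : 0 < n0 -> 0 < alpha -> 0 < P ->
  omega_spec alpha omega -> 0 < T ->
  ex_series (fun j => I_term n0 alpha P omega T (S (S j))).
Proof.
  intros Hn Ha HP Hs HT.
  apply (@ex_series_le R_AbsRing R_CompleteNormedModule) with
    (b := fun j => (2 * alpha * P / n0 * T ^ 2) * / (INR j + 1) ^ 2).
  - intros j. destruct (tail_bound n0 alpha P omega T j Hn Ha HP Hs HT) as [H0 H1].
    change (norm (I_term n0 alpha P omega T (S (S j)))) with (Rabs (I_term n0 alpha P omega T (S (S j)))).
    rewrite Rabs_pos_eq; auto.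
  - apply (@ex_series_scal_l R_AbsRing R_NormedModule _ (fun j => / (INR j + 1) ^ 2)).
    apply zeta2.
Qed.

Lemma series0 : Series (fun _ => 0) = 0.
Proof.
  rewrite (Series_ext (fun _ => 0) (fun n => 0 * 0)) by (intros; ring).
  rewrite Series_scal_l. ring.
Qed.

Theorem theorem3 (n0 alpha P : R) (omega : nat -> R -> R) :
  0 < n0 -> 0 < alpha -> 0 < P ->
  omega_spec alpha omega ->
  (forall T : R, 0 < T -> ex_series (fun j => I_term n0 alpha P omega T (S j))) /\
  filterlim (fun T => (mutual_info n0 alpha P omega T - 0) / (T - 0))
    (at_right 0) (locally (P / n0)).
Proof.
  intros Hn Ha HP Hs.
  assert (Hex : forall T : R, 0 < T -> ex_series (fun j => I_term n0 alpha P omega T (S j))).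
  { intros T HT. apply ex_series_incr_1. apply tail_ex; auto. }
  split; [exact Hex|].
  set (Z := Series (fun j => / (INR j + 1) ^ 2)).
  set (KZ := 2 * alpha * P / n0 * Z).
  set (D := n0 * alpha ^ 2 + 4 * alpha * P).
  set (M := P * D / (2 * alpha * n0 ^ 2)).
  assert (HZ : 0 <= Z).
  { unfold Z. rewrite <- series0.
    apply Series_le; [|apply zeta2]. intros j. split; [lra|].
    apply Rlt_le, Rinv_0_lt_compat, pow_lt. pose proof (pos_INR j). lra. }
  assert (HKZ : 0 <= KZ).
  { unfold KZ. apply Rmult_le_pos; auto. apply Rlt_le, Rdiv_lt_0_compat; nra. }
  assert (HD : 0 < D).
  { unfold D. assert (0 < n0 * alpha ^ 2) by (apply Rmult_lt_0_compat; [lra|apply pow_lt; lra]).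
    assert (0 < 4 * alpha * P) by (apply Rmult_lt_0_compat; lra). lra. }
  assert (HM0 : 0 < M) by (unfold M; apply Rdiv_lt_0_compat; [apply Rmult_lt_0_compat; lra|];
          apply Rmult_lt_0_compat; [lra|apply pow_lt; lra]).
  assert (Key : forall T, 0 < T ->
    P / n0 - M * T <= mutual_info n0 alpha P omega T / T <= P / n0 + KZ * T).
  { intros T HT.
    unfold mutual_info. rewrite Series_incr_1 by (apply Hex; auto).
    destruct (om1_bounds alpha omega T Ha Hs HT) as [Hw [Hw1 Hw2]].
    set (w := omega 1%nat T) in *.
    assert (HX : 0 < alpha ^ 2 + w ^ 2) by nra.
    destruct (term_bounds n0 alpha P omega T 1 Hn Ha HP HX) as [_ [Hl Hu]].
    fold w in Hl, Hu.
    apply (alg n0 alpha P T (alpha ^ 2 + w ^ 2)); auto.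
    - split; nra.
    - split.
      + rewrite <- series0.
        apply Series_le; [|apply tail_ex; auto].
        intros j. split; [lra|]. apply (tail_bound n0 alpha P omega T j); auto.
      + replace (KZ * T ^ 2) with ((2 * alpha * P / n0 * T ^ 2) * Z) by (unfold KZ; ring).
        unfold Z. rewrite <- Series_scal_l.
        apply Series_le.
        * intros j. apply (tail_bound n0 alpha P omega T j); auto.
        * apply (@ex_series_scal_l R_AbsRing R_NormedModule _ (fun j => / (INR j + 1) ^ 2)).
          apply zeta2. }
  apply filterlim_locally. intros eps.
  set (K := M + KZ + 1).
  assert (HK : 0 < K) by (unfold K; lra).
  exists (mkposreal (eps / K) (Rdiv_lt_0_compat _ _ (cond_pos eps) HK)).
  intros T HTb HT. simpl in HTb.
  change (Rabs (T - 0) < eps / K) in HTb.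
  rewrite Rminus_0_r in HTb. rewrite Rabs_pos_eq in HTb by lra.
  destruct (Key T HT) as [K1 K2].
  change (Rabs ((mutual_info n0 alpha P omega T - 0) / (T - 0) - P / n0) < eps).
  rewrite !Rminus_0_r.
  assert (HTK : T * K < eps).
  { apply Rmult_lt_compat_r with (r := K) in HTb; auto.
    replace (eps / K * K) with (pos eps) in HTb by (field; lra). lra. }
  unfold K in HTK.
  apply Rabs_def1; nra.
Qed.
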